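(* Let $H$ be a connected graph, $G_n$ a graph with $N(H,G_n)>0$, $p_n\in(0,1)$, and $\varepsilon>0$. Define $$M_n=\sum_{\substack{A\subset V(G_n)\\1\le|A|\le|V(H)|}}t_H(A)\,\mathbf 1\{t_H(A)>\varepsilon p_n^{|A|}N(H,G_n)\}.$$ Then (a) $\frac{M_n}{2^{|V(H)|}-1}\le N(H,G_n)-N_\varepsilon^+(H,G_n)\le M_n$, and (b) $\mathbb P(T(H,G_n)\ne T_\varepsilon^+(H,G_n))\le\frac{M_n}{\varepsilon N(H,G_n)}$.
   Context: $G_n$ is a simple labeled graph on $V(G_n)=\{1,\dots,|V(G_n)|\}$ with adjacency $(a_{ij})$; $H=(V(H),E(H))$ with $|Aut(H)|$ automorphisms. $V(G_n)_k$ is the set of $k$-tuples of distinct vertices, $\bar{\mathbf s}$ the set of entries. $M_H(\mathbf s)=\prod_{(i,j)\in E(H)}a_{s_is_j}$, $N(H,G_n)=\frac1{|Aut(H)|}\sum_{\mathbf s\in V(G_n)_{|V(H)|}}M_H(\mathbf s)$, $t_H(A)=\frac1{|Aut(H)|}\sum_{\mathbf s:\bar{\mathbf s}\supseteq A}M_H(\mathbf s)$. $\{X_v\}$ i.i.d. Bernoulli$(p_n)$, $X_{\mathbf s}=\prod_uX_{s_u}$, $T(H,G_n)=\frac1{|Aut(H)|}\sum_{\mathbf s}M_H(\mathbf s)X_{\mathbf s}$. For $\mathbf s\in V(G_n)_{|V(H)|}$ let $b_\varepsilon(\mathbf s)=1$ if $t_H(A)\le\varepsilon p_n^{|A|}N(H,G_n)$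 for every nonempty $A\subseteq\bar{\mathbf s}$, and $b_\varepsilon(\mathbf s)=0$ otherwise. Set $T_\varepsilon^+(H,G_n)=\frac1{|Aut(H)|}\sum_{\mathbf s}M_H(\mathbf s)X_{\mathbf s}b_\varepsilon(\mathbf s)$ and $N_\varepsilon^+(H,G_n)=p_n^{-|V(H)|}\mathbb E[T_\varepsilon^+(H,G_n)]$. *)

(* Defs.v *)
From HB Require Import structures.
From mathcomp Require Import all_boot all_order all_fingroup all_algebra.
Set Implicit Arguments. Unset Strict Implicit. Unset Printing Implicit Defensive.
Import Order.TTheory GRing.Theory Num.Theory.
Local Open Scope ring_scope.

(* A k-tuple of distinct vertices is an injective s : {ffun 'I_k -> 'I_n}. *)

Definition autH (k : nat) (h : rel 'I_k) : nat :=
  #|[set sg : {perm 'I_k} | [forall i, forall j, h (sg i) (sg j) == h i j]]|.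

Definition tset (n k : nat) (s : {ffun 'I_k -> 'I_n}) : {set 'I_n} :=
  [set s i | i in [set: 'I_k]].

Definition MH (R : realFieldType) (n k : nat) (a : rel 'I_n) (h : rel 'I_k)
  (s : {ffun 'I_k -> 'I_n}) : R :=
  \prod_(i : 'I_k) \prod_(j : 'I_k | (i < j)%N && h i j) (a (s i) (s j) : nat)%:R.

Definition NH (R : realFieldType) (n k : nat) (a : rel 'I_n) (h : rel 'I_k) : R :=
  (autH h)%:R^-1 * \sum_(s : {ffun 'I_k -> 'I_n} | injectiveb s) MH R a h s.

Definition tH (R : realFieldType) (n k : nat) (a : rel 'I_n) (h : rel 'I_k)
  (A : {set 'I_n}) : R :=
  (autH h)%:R^-1 *
  \sum_(s : {ffun 'I_k -> 'I_n} | injectiveb s && (A \subset tset s)) MH R a h s.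

Definition beps (R : realFieldType) (n k : nat) (a : rel 'I_n) (h : rel 'I_k)
  (p eps : R) (s : {ffun 'I_k -> 'I_n}) : bool :=
  [forall A : {set 'I_n}, ((A != set0) && (A \subset tset s)) ==>
     (tH R a h A <= eps * p ^+ #|A| * NH R a h)].

(* Sample space: x : {ffun 'I_n -> bool}, X_v = x v.
   Law of i.i.d. Bernoulli(p): P({x}) = prod_v p^{x_v} (1-p)^{1-x_v}. *)
Definition Prob (R : realFieldType) (n : nat) (p : R) (x : {ffun 'I_n -> bool}) : R :=
  \prod_(v : 'I_n) (if x v then p else 1 - p).

Definition Expect (R : realFieldType) (n : nat) (p : R)
  (f : {ffun 'I_n -> bool} -> R) : R :=
  \sum_(x : {ffun 'I_n -> bool}) Prob p x * f x.

Definition Pr (R : realFieldType) (n : nat) (p : R)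
  (E : pred {ffun 'I_n -> bool}) : R :=
  \sum_(x : {ffun 'I_n -> bool} | E x) Prob p x.

Definition Xs (R : realFieldType) (n k : nat) (s : {ffun 'I_k -> 'I_n})
  (x : {ffun 'I_n -> bool}) : R :=
  \prod_(u : 'I_k) (x (s u) : nat)%:R.

Definition TH (R : realFieldType) (n k : nat) (a : rel 'I_n) (h : rel 'I_k)
  (x : {ffun 'I_n -> bool}) : R :=
  (autH h)%:R^-1 *
  \sum_(s : {ffun 'I_k -> 'I_n} | injectiveb s) MH R a h s * Xs R s x.

Definition THplus (R : realFieldType) (n k : nat) (a : rel 'I_n) (h : rel 'I_k)
  (p eps : R) (x : {ffun 'I_n -> bool}) : R :=
  (autH h)%:R^-1 *
  \sum_(s : {ffun 'I_k -> 'I_n} | injectiveb s)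
     MH R a h s * Xs R s x * (beps a h p eps s : nat)%:R.

Definition NHplus (R : realFieldType) (n k : nat) (a : rel 'I_n) (h : rel 'I_k)
  (p eps : R) : R :=
  p ^- k * Expect p (THplus a h p eps).

Definition Mn (R : realFieldType) (n k : nat) (a : rel 'I_n) (h : rel 'I_k)
  (p eps : R) : R :=
  \sum_(A : {set 'I_n} | (1 <= #|A| <= k)%N)
     tH R a h A * (nat_of_bool (eps * p ^+ #|A| * NH R a h < tH R a h A)%R)%:R.

Definition connected_graph (k : nat) (h : rel 'I_k) : Prop :=
  forall i j : 'I_k, connect h i j.

(* Main.v *)
Require Import Defs.
From HB Require Import structures.
From mathcomp Require Import all_boot all_order all_fingroup all_algebra.
From mathcomp Require Import ring.
Import Order.TTheory GRing.Theory Num.Theory.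
Local Open Scope ring_scope.
Set Implicit Arguments. Unset Strict Implicit. Unset Printing Implicit Defensive.
Lemma probE (R : realFieldType) n (p : R) (S : {set 'I_n}) :
  \sum_(x : {ffun 'I_n -> bool}) Prob p x * \prod_(v in S) (x v : nat)%:R = p ^+ #|S|.
Proof.
pose G (v : 'I_n) (b : bool) : R := (if b then p else 1 - p) * (if v \in S then (b : nat)%:R else 1).
rewrite (eq_bigr (fun x : {ffun 'I_n -> bool} => \prod_v G v (x v))); last first.
  by move=> x _; rewrite /G big_split /= big_mkcond.
rewrite -bigA_distr_bigA /= -prodr_const [RHS]big_mkcond /=.
apply: congr_big => // v _; rewrite big_bool /G /=.
by case: (v \in S); rewrite ?mulr1 ?mulr0 ?addr0 // addrC subrK.
Qed.

Lemma Xs_tset (R : realFieldType) n k (s : {ffun 'I_k -> 'I_n}) x :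
  injectiveb s -> Xs R s x = \prod_(v in tset s) (x v : nat)%:R.
Proof.
move=> /injectiveP inj; rewrite /tset big_imset /=; last by move=> i j _ _; apply: inj.
by rewrite /Xs; apply: eq_bigl => i; rewrite in_setT.
Qed.

Lemma card_tset n k (s : {ffun 'I_k -> 'I_n}) : injectiveb s -> #|tset s| = k.
Proof. by move=> /injectiveP inj; rewrite /tset card_imset // cardsT card_ord. Qed.

Lemma card_tset_le n k (s : {ffun 'I_k -> 'I_n}) : (#|tset s| <= k)%N.
Proof. by rewrite /tset (leq_trans (leq_imset_card _ _)) // cardsT card_ord. Qed.

Section S.
Variables (R : realFieldType) (n k : nat) (a : rel 'I_n) (h : rel 'I_k) (p eps : R).

Notation cA := ((autH h)%:R^-1 : R).
Notation bad A := (eps * p ^+ #|A| * NH R a h < tH R a h A).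
Notation bb s := ((beps a h p eps s : nat)%:R : R).
Definition cnt (s : {ffun 'I_k -> 'I_n}) : R :=
  \sum_(A : {set 'I_n} | (1 <= #|A| <= k)%N)
     (if A \subset tset s then (bad A : nat)%:R else 0).

Lemma MH_ge0 (s : {ffun 'I_k -> 'I_n}) : 0 <= MH R a h s.
Proof. by apply: prodr_ge0 => i _; apply: prodr_ge0 => j _; apply: ler0n. Qed.

Lemma cA_ge0 : 0 <= cA.
Proof. by rewrite invr_ge0 ler0n. Qed.

Lemma NHplusE : p != 0 ->
  NHplus a h p eps = cA * \sum_(s : {ffun 'I_k -> 'I_n} | injectiveb s) MH R a h s * bb s.
Proof.
move=> p0; rewrite /NHplus /Expect /THplus.
transitivity (p ^- k * (cA * \sum_(s : {ffun 'I_k -> 'I_n} | injectiveb s) MH R a h s * bb s * p ^+ k)); last first.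
  by rewrite -mulr_suml mulrCA [p ^- k * _]mulrCA mulVf ?mulr1 // expf_neq0.
congr (_ * _).
transitivity (cA * \sum_x \sum_(s : {ffun 'I_k -> 'I_n} | injectiveb s) Prob p x * (MH R a h s * Xs R s x * bb s)).
  rewrite mulr_sumr; apply: eq_bigr => x _; by rewrite mulrCA mulr_sumr.
congr (_ * _); rewrite exchange_big /=; apply: eq_bigr => s inj.
have := probE p (tset s); rewrite card_tset // => <-; rewrite mulr_sumr; apply: eq_bigr => x _.
rewrite Xs_tset //.
ring.
Qed.

Lemma MnE : Mn a h p eps = cA * \sum_(s : {ffun 'I_k -> 'I_n} | injectiveb s) MH R a h s * cnt s.
Proof.
have E : forall A : {set 'I_n}, tH R a h A * (bad A : nat)%:R = cA * \sum_(s : {ffun 'I_k -> 'I_n} | injectiveb s) (if A \subset tset s then MH R a h s * (bad A : nat)%:R else 0).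
  move=> A; rewrite {1}/tH -[LHS]mulrA mulr_suml big_mkcondr /=; congr (_ * _).
rewrite /Mn (eq_bigr _ (fun A _ => E A)).
rewrite -mulr_sumr; congr (_ * _); rewrite exchange_big /=.
apply: eq_bigr => s inj; rewrite /cnt mulr_sumr; apply: eq_bigr => A _.
by case: ifP; rewrite ?mulr0 ?mul0r.
Qed.

Lemma bfalse (s : {ffun 'I_k -> 'I_n}) : beps a h p eps s = false ->
  exists A : {set 'I_n}, [/\ A != set0, A \subset tset s & bad A].
Proof.
move/negbT => /forallPn [A]; rewrite negb_imply => /andP[/andP[A0 sub]].
by rewrite -ltNge => b; exists A.
Qed.

Lemma P_of (s : {ffun 'I_k -> 'I_n}) (A : {set 'I_n}) : A != set0 -> A \subset tset s -> (1 <= #|A| <= k)%N.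
Proof.
move=> A0 sub; rewrite card_gt0 A0 /=.
exact: leq_trans (subset_leq_card sub) (card_tset_le s).
Qed.

Lemma cnt_ge0 (s : {ffun 'I_k -> 'I_n}) : 0 <= cnt s.
Proof. by apply: sumr_ge0 => A _; case: ifP => _; rewrite ?ler0n. Qed.

Lemma cnt_lb (s : {ffun 'I_k -> 'I_n}) : 1 - bb s <= cnt s.
Proof.
case E: (beps a h p eps s); first by rewrite subrr cnt_ge0.
have [A [A0 sub bA]] := bfalse E.
rewrite /= subr0 /cnt (bigD1 A) /=; last exact: (P_of A0 sub).
rewrite sub bA /= lerDl.
by apply: sumr_ge0 => B _; case: ifP => _; rewrite ?ler0n.
Qed.

Lemma cnt_ub (s : {ffun 'I_k -> 'I_n}) : cnt s <= (2%:R ^+ k - 1) * (1 - bb s).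
Proof.
case E: (beps a h p eps s).
  rewrite /= subrr mulr0 le_eqVlt; apply/orP; left; apply/eqP.
  apply: big1 => A /andP[A1 _]; case: ifP => // sub.
  move: E => /forallP /(_ A); rewrite sub andbT -card_gt0 A1 /= => le.
  by rewrite ltNge le.
rewrite subr0 mulr1.
pose S0 := powerset (tset s) :\ set0.
apply: (@le_trans _ _ (\sum_(A in S0) 1)).
  rewrite /cnt [X in _ <= X]big_mkcond [X in X <= _]big_mkcond /=; apply: ler_sum => A _.
  rewrite /S0 in_setD1 powersetE.
  case: ifP => P; case: ifP => sub; rewrite ?andbT ?andbF /=;
    try by [rewrite lexx | rewrite ler01 | case: ifP; rewrite ?ler01 ?lexx].
  have -> : A != set0 by rewrite -card_gt0; case/andP: P.
  by case: (bad A); rewrite ?mulr0n ?mulr1n ?ler01 ?lexx.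
have cS : (#|S0| = 2 ^ #|tset s| - 1)%N.
  by rewrite -card_powerset (cardsD1 set0 (powerset (tset s))) powersetE sub0set add1n subn1.
rewrite sumr_const cS.
apply: (@le_trans _ _ (2 ^ k - 1)%N%:R).
  rewrite ler_nat; apply: leq_sub2r; apply: leq_pexp2l => //; exact: card_tset_le.
by rewrite natrB ?expn_gt0 // natrX.
Qed.


Lemma Prob_ge0 (x : {ffun 'I_n -> bool}) : 0 < p -> p < 1 -> 0 <= Prob p x.
Proof.
move=> p0 p1; apply: prodr_ge0 => v _; case: (x v); first exact: ltW.
by rewrite subr_ge0 ltW.
Qed.

Lemma diff_ub (x : {ffun 'I_n -> bool}) : ((TH R a h x != THplus a h p eps x : nat)%:R : R) <=
  \sum_(A : {set 'I_n} | (1 <= #|A| <= k)%N) (bad A : nat)%:R * \prod_(v in A) (x v : nat)%:R.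
Proof.
have rge0 : 0 <= \sum_(A : {set 'I_n} | (1 <= #|A| <= k)%N) (bad A : nat)%:R * \prod_(v in A) (x v : nat)%:R :> R.
  by apply: sumr_ge0 => A _; apply: mulr_ge0; [exact: ler0n | apply: prodr_ge0 => v _; exact: ler0n].
case: (boolP [exists s : {ffun 'I_k -> 'I_n}, injectiveb s && (MH R a h s * Xs R s x * bb s != MH R a h s * Xs R s x)]).
  move=> /existsP [s /andP[inj ne]].
  have E : beps a h p eps s = false.
    by apply/negbTE; apply: contra ne => bs; rewrite bs /= mulr1n mulr1.
  have X0 : Xs R s x != 0.
    by apply: contra ne => /eqP ->; rewrite mulr0 mul0r.
  have [A [A0 sub bA]] := bfalse E.
  have PA := P_of A0 sub.
  rewrite (bigD1 A) //=.
  have -> : \prod_(v in A) (x v : nat)%:R = 1 :> R.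
    apply: big1 => v vA.
    have : v \in tset s by apply: (subsetP sub).
    case/imsetP => u _ ->.
    case xu: (x (s u)) => //.
    by move: X0; rewrite /Xs (bigD1 u) //= xu mul0r eqxx.
  rewrite bA mulr1 /= mulr1n.
  apply: (@le_trans _ _ 1).
    by case: (_ != _); rewrite /= ?mulr1n ?mulr0n ?lexx ?ler01.
  rewrite lerDl; apply: sumr_ge0 => B _; apply: mulr_ge0; [exact: ler0n | apply: prodr_ge0 => v _; exact: ler0n].
move=> /existsPn H.
have -> : TH R a h x = THplus a h p eps x.
  rewrite /TH /THplus; congr (_ * _); apply: eq_bigr => s inj.
  by move: (H s); rewrite inj /= negbK => /eqP ->.
by rewrite eqxx.
Qed.
End S.

Unset Implicit Arguments.

Theorem lemma3p1 (R : realFieldType) (n k : nat) (a : rel 'I_n) (h : rel 'I_k)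
  (p eps : R) :
  symmetric a -> irreflexive a ->
  symmetric h -> irreflexive h -> connected_graph h ->
  0 < NH R a h -> 0 < p -> p < 1 -> 0 < eps ->
  (Mn a h p eps / (2%:R ^+ k - 1) <= NH R a h - NHplus a h p eps
   /\ NH R a h - NHplus a h p eps <= Mn a h p eps)
  /\ Pr p (fun x => TH R a h x != THplus a h p eps x)
     <= Mn a h p eps / (eps * NH R a h).
Proof.
move=> _ _ _ _ _ N0 p0 p1 e0.
have pn0 : p != 0 by rewrite (gt_eqF p0).
have DE : NH R a h - NHplus a h p eps = (autH h)%:R^-1 *
   \sum_(s : {ffun 'I_k -> 'I_n} | injectiveb s) MH R a h s * (1 - (beps a h p eps s : nat)%:R).
  rewrite NHplusE // /NH -mulrBr -sumrB; congr (_ * _).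
  by apply: eq_bigr => s _; rewrite mulrBr mulr1.
have D0 : 0 <= NH R a h - NHplus a h p eps.
  rewrite DE; apply: mulr_ge0; first exact: cA_ge0.
  apply: sumr_ge0 => s _; apply: mulr_ge0; first exact: MH_ge0.
  by case: (beps _ _ _ _ _); rewrite /= ?mulr1n ?mulr0n subr_ge0 ?lexx ?ler01.
split; first split.
- case k2: (2%:R ^+ k - 1 == 0 :> R).
    by rewrite (eqP k2) invr0 mulr0.
  have kpos : 0 < 2%:R ^+ k - 1 :> R.
    by rewrite lt_neqAle eq_sym k2 subr_ge0 exprn_ege1 // ler1n.
  rewrite ler_pdivrMr // MnE DE -mulrA mulr_suml.
  apply: ler_wpM2l; first exact: cA_ge0.
  apply: ler_sum => s _; rewrite -mulrA; apply: ler_wpM2l; first exact: MH_ge0.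
  by rewrite mulrC cnt_ub.
- rewrite MnE DE; apply: ler_wpM2l; first exact: cA_ge0.
  apply: ler_sum => s _; apply: ler_wpM2l; first exact: MH_ge0.
  exact: cnt_lb.
rewrite /Pr big_mkcond /=.
apply: (@le_trans _ _ (\sum_x Prob p x *
   \sum_(A : {set 'I_n} | (1 <= #|A| <= k)%N)
     ((eps * p ^+ #|A| * NH R a h < tH R a h A)%R : nat)%:R * \prod_(v in A) (x v : nat)%:R)).
  apply: ler_sum => x _.
  have -> : (if TH R a h x != THplus a h p eps x then Prob p x else 0)
      = Prob p x * (TH R a h x != THplus a h p eps x : nat)%:R.
    by case: (_ != _); rewrite /= ?mulr1n ?mulr0n ?mulr1 ?mulr0.
  by apply: ler_wpM2l; [exact: Prob_ge0 | exact: diff_ub].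
under eq_bigr do rewrite mulr_sumr.
rewrite exchange_big /= /Mn mulr_suml; apply: ler_sum => A _.
under eq_bigr do rewrite mulrCA.
rewrite -mulr_sumr probE.
case bA: (eps * p ^+ #|A| * NH R a h < tH R a h A) => /=;
  rewrite ?mulr1n ?mulr0n ?mulr1 ?mul0r ?mulr0 //.
have eN : 0 < eps * NH R a h by apply: mulr_gt0.
rewrite ler_pdivlMr //.
rewrite mul1r.
have -> : p ^+ #|A| * (eps * NH R a h) = eps * p ^+ #|A| * NH R a h by ring.
exact: ltW.
by rewrite mul0r.
Qed.
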